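(* Let $S$ be a subset with $\mathbb{R}\times[0,1)\subset S\subset\mathbb{R}\times[0,1]$ which is open in $\mathbb{R}\times[0,1]$. Then there exist a set $S'$ and a homeomorphism $h:S\to S'$ such that: (1) $\mathbb{R}\times[0,1)\subset S'\subset S\subset\mathbb{R}\times[0,1]$; (2) the connected components of $S'\cap(\mathbb{R}\times\{1\})$ have closures which are bounded in $\mathbb{R}^2$ and mutually disjoint; (3) $h$ is the identity on $\mathbb{R}\times\{0\}$; (4) $h$ preserves the second coordinate, i.e. $h(x,y)=(h_1(x,y),y)$ for all $(x,y)\in S$ (in particular $h$ maps horizontal leaves to horizontal leaves). *)

(* Defs.v *)
From Stdlib Require Import Reals.
Open Scope R_scope.

Definition pt : Type := (R * R)%type.

Definition dist2 (p q : pt) : R :=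
  sqrt ((fst p - fst q)^2 + (snd p - snd q)^2).

Definition rel_open (A U : pt -> Prop) : Prop :=
  (forall p, U p -> A p) /\
  forall p, U p -> exists eps, eps > 0 /\
    forall q, A q -> dist2 p q < eps -> U q.

Definition strip (p : pt) : Prop := 0 <= snd p <= 1.

Definition continuous_on (A : pt -> Prop) (f : pt -> pt) : Prop :=
  forall p, A p -> forall eps, eps > 0 -> exists delta, delta > 0 /\
    forall q, A q -> dist2 p q < delta -> dist2 (f p) (f q) < eps.

(* h : A -> B is a homeomorphism (h, g represented as total functions
   whose relevant behaviour is on A, resp. B) *)
Definition homeomorphism (A B : pt -> Prop) (h : pt -> pt) : Prop :=
  (forall p, A p -> B (h p)) /\
  exists g : pt -> pt,
    (forall q, B q -> A (g q)) /\
    (forall p, A p -> g (h p) = p) /\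
    (forall q, B q -> h (g q) = q) /\
    continuous_on A h /\ continuous_on B g.

Definition connected (C : pt -> Prop) : Prop :=
  forall U V, rel_open C U -> rel_open C V ->
    (forall p, C p -> U p \/ V p) ->
    (exists p, U p) -> (exists p, V p) ->
    exists p, U p /\ V p.

Definition component (A C : pt -> Prop) : Prop :=
  (exists p, C p) /\ (forall p, C p -> A p) /\ connected C /\
  forall D, connected D -> (forall p, D p -> A p) ->
    (exists p, D p /\ C p) -> forall p, D p -> C p.

Definition closure2 (A : pt -> Prop) (p : pt) : Prop :=
  forall eps, eps > 0 -> exists q, A q /\ dist2 p q < eps.

Definition bounded2 (A : pt -> Prop) : Prop :=
  exists M, forall p, A p -> dist2 (0, 0) p <= M.

(* Main.v *)
Require Import Defs.
From Stdlib Require Import Reals Lra Psatz Classical ClassicalEpsilon.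
From Coquelicot Require Coquelicot.
Open Scope R_scope.


Definition closedR (K : R -> Prop) := forall v, ~ K v ->
  exists e, e > 0 /\ forall z, Rabs (z - v) < e -> ~ K z.
Definition unbdd_below (K : R -> Prop) := forall u, exists v, v <= u /\ K v.

Definition Eset (K : R -> Prop) u := fun v => v <= u /\ K v.
Definition aK (K : R -> Prop) (u : R) : R :=
  epsilon (inhabits 0) (fun m => is_lub (Eset K u) m).

Section A.
Variable K : R -> Prop.
Hypothesis Kc : closedR K.
Hypothesis Kb : unbdd_below K.

Lemma a_lub u : is_lub (Eset K u) (aK K u).
Proof.
  unfold aK. apply epsilon_spec.
  assert (Hb : bound (Eset K u)) by (exists u; intros v [Hv _]; exact Hv).
  assert (He : exists x, Eset K u x) by (destruct (Kb u) as [v Hv]; exists v; exact Hv).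
  destruct (completeness _ Hb He) as [m Hm]. exists m; exact Hm.
Qed.

Lemma a_le u : aK K u <= u.
Proof. apply (proj2 (a_lub u)). intros v [Hv _]; exact Hv. Qed.

Lemma a_ge u v : K v -> v <= u -> v <= aK K u.
Proof. intros H1 H2. apply (proj1 (a_lub u)). split; assumption. Qed.

Lemma a_in u : K (aK K u).
Proof.
  apply NNPP; intro Hn. destruct (Kc _ Hn) as [e [He Hz]].
  set (a := aK K u) in *.
  assert (~ is_upper_bound (Eset K u) (a - e/2)).
  { intro Hub. pose proof (proj2 (a_lub u) _ Hub). fold a in H. lra. }
  apply H. intros v Hv. apply Rnot_lt_le. intro Hlt.
  assert (v <= a) by (apply (proj1 (a_lub u)); exact Hv).
  apply (Hz v). apply Rabs_def1; lra. exact (proj2 Hv).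
Qed.

Lemma a_const u v : u <= v -> (forall z, u < z <= v -> ~ K z) -> aK K v = aK K u.
Proof.
  intros Huv Hf.
  assert (aK K u <= aK K v) by (apply a_ge; [apply a_in| pose proof (a_le u); lra]).
  assert (aK K v <= aK K u).
  { destruct (Rle_dec (aK K v) u).
    - apply a_ge; [apply a_in | assumption].
    - exfalso. apply (Hf (aK K v)). split; [lra| apply a_le]. apply a_in. }
  lra.
Qed.
End A.

Definition negK (K : R -> Prop) := fun w => K (- w).
Definition bK (K : R -> Prop) (u : R) : R := - aK (negK K) (- u).

Section B.
Variable K : R -> Prop.
Hypothesis Kc : closedR K.
Hypothesis Kb : unbdd_below K.
Hypothesis Ka : forall u, exists v, u <= v /\ K v.

Lemma negK_closed : closedR (negK K).
Proof.
  intros v Hv. unfold negK in Hv. destruct (Kc _ Hv) as [e [He Hz]].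
  exists e; split; auto. intros z Hz'. unfold negK. apply Hz.
  replace (- z - - v) with (- (z - v)) by ring. rewrite Rabs_Ropp; auto.
Qed.

Lemma negK_unbdd : unbdd_below (negK K).
Proof.
  intro u. destruct (Ka (- u)) as [v [H1 H2]]. exists (- v). split. lra.
  unfold negK. rewrite Ropp_involutive; auto.
Qed.

Lemma b_ge u : u <= bK K u.
Proof. unfold bK. pose proof (a_le (negK K) negK_unbdd (- u)). lra. Qed.

Lemma b_le u v : K v -> u <= v -> bK K u <= v.
Proof.
  intros H1 H2. unfold bK.
  assert (- v <= aK (negK K) (- u)).
  { apply a_ge. apply negK_unbdd. unfold negK; rewrite Ropp_involutive; auto. lra. }
  lra.
Qed.

Lemma b_in u : K (bK K u).
Proof.
  unfold bK. pose proof (a_in (negK K) negK_closed negK_unbdd (- u)). exact H.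
Qed.

Lemma b_const u v : u <= v -> (forall z, u <= z < v -> ~ K z) -> bK K u = bK K v.
Proof.
  intros Huv Hf. unfold bK. f_equal.
  apply (a_const (negK K) negK_closed negK_unbdd). lra.
  intros z Hz. unfold negK. apply Hf. lra.
Qed.

Lemma c_le u : aK K u <= u <= bK K u.
Proof. split; [apply a_le; auto| apply b_ge]. Qed.

Lemma c_K u : K u -> aK K u = u /\ bK K u = u.
Proof.
  intro H. pose proof (c_le u). split.
  - pose proof (a_ge K Kb u u H (Rle_refl u)). lra.
  - pose proof (b_le u u H (Rle_refl u)). lra.
Qed.

Lemma c_notK u : ~ K u -> aK K u < u < bK K u.
Proof.
  intro H. pose proof (c_le u). split.
  - destruct H0 as [H0 _]. destruct H0; auto. exfalso; apply H; rewrite <- H0; apply a_in; auto.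
  - destruct H0 as [_ H0]. destruct H0; auto. exfalso; apply H; rewrite H0; apply b_in; auto.
Qed.

Lemma c_free u z : aK K u < z < bK K u -> ~ K z.
Proof.
  intros [H1 H2] Hz. destruct (Rle_dec z u).
  - pose proof (a_ge K Kb u z Hz r). lra.
  - pose proof (b_le u z Hz ltac:(lra)). lra.
Qed.

Lemma c_same u z : aK K u < z < bK K u -> aK K z = aK K u /\ bK K z = bK K u.
Proof.
  intros [H1 H2]. pose proof (c_le u). destruct (Rle_dec z u).
  - split.
    + symmetry. apply (a_const K Kc Kb z u r).
      intros t Ht Hk. pose proof (a_ge K Kb u t Hk ltac:(lra)). lra.
    + apply (b_const z u r).
      intros t Ht Hk. pose proof (a_ge K Kb u t Hk ltac:(lra)). lra.
  - split.
    + apply (a_const K Kc Kb u z ltac:(lra)).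
      intros t Ht Hk. pose proof (b_le u t Hk ltac:(lra)). lra.
    + symmetry. apply (b_const u z ltac:(lra)).
      intros t Ht Hk. pose proof (b_le u t Hk ltac:(lra)). lra.
Qed.
End B.

Definition F3 a1 b1 a2 b2 a3 b3 x := Rmax (Rmin (a1*x+b1) (a2*x+b2)) (a3*x+b3).
Definition G3 a1 b1 a2 b2 a3 b3 y := Rmin (Rmax ((y-b1)/a1) ((y-b2)/a2)) ((y-b3)/a3).

Lemma aff_gal a b x y : a > 0 -> (a*x + b <= y <-> x <= (y - b)/a).
Proof.
  intro Ha. split; intro H.
  - apply (Rmult_le_reg_r a); auto. unfold Rdiv; rewrite Rmult_assoc, Rinv_l by lra. lra.
  - apply (Rmult_le_compat_r a) in H; [|lra].
    unfold Rdiv in H; rewrite Rmult_assoc, Rinv_l in H by lra. lra.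
Qed.

Lemma aff_lt a b x y : a > 0 -> x < y -> a*x+b < a*y+b.
Proof. intros; nra. Qed.
Lemma div_lt a b x y : a > 0 -> x < y -> (x-b)/a < (y-b)/a.
Proof. intros. unfold Rdiv. apply Rmult_lt_compat_r. apply Rinv_0_lt_compat; auto. lra. Qed.

Section G.
Variables a1 b1 a2 b2 a3 b3 : R.
Hypotheses (h1 : a1 > 0) (h2 : a2 > 0) (h3 : a3 > 0).
Let F := F3 a1 b1 a2 b2 a3 b3.
Let G := G3 a1 b1 a2 b2 a3 b3.

Lemma FG_gal x y : F x <= y <-> x <= G y.
Proof.
  unfold F, G, F3, G3.
  pose proof (aff_gal a1 b1 x y h1). pose proof (aff_gal a2 b2 x y h2).
  pose proof (aff_gal a3 b3 x y h3).
  unfold Rmax, Rmin; repeat destruct Rle_dec; tauto || lra.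
Qed.

Lemma F_strict x y : x < y -> F x < F y.
Proof.
  intro H. unfold F, F3.
  pose proof (aff_lt a1 b1 x y h1 H). pose proof (aff_lt a2 b2 x y h2 H).
  pose proof (aff_lt a3 b3 x y h3 H).
  unfold Rmax, Rmin; repeat destruct Rle_dec; lra.
Qed.

Lemma G_strict x y : x < y -> G x < G y.
Proof.
  intro H. unfold G, G3.
  pose proof (div_lt a1 b1 x y h1 H). pose proof (div_lt a2 b2 x y h2 H).
  pose proof (div_lt a3 b3 x y h3 H).
  unfold Rmax, Rmin; repeat destruct Rle_dec; lra.
Qed.

Lemma GF x : G (F x) = x.
Proof.
  assert (x <= G (F x)) by (apply FG_gal; lra).
  destruct H; auto. exfalso.
  assert (F (G (F x)) <= F x) by (apply FG_gal; lra).
  pose proof (F_strict _ _ H). lra.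
Qed.

Lemma FG y : F (G y) = y.
Proof.
  assert (F (G y) <= y) by (apply FG_gal; lra).
  destruct H; auto. exfalso.
  assert (G y <= G (F (G y))) by (apply FG_gal; lra).
  pose proof (G_strict _ _ H). lra.
Qed.
End G.

Definition kk s := / (1 - s).
Definition cc1 s := 1 - 2 * s / 3.
Definition Pf s w L := if Rlt_dec s 1 then F3 (kk s) 0 (cc1 s) (s*w/3) (kk s) (w - kk s * w) L
  else (L + w) / 3.
Definition Qf s w L := Rmin (Rmax ((1 - s) * L) ((L - s*w/3) / cc1 s)) (w - (1 - s) * (w - L)).

Lemma kk_pos s : 0 <= s < 1 -> kk s >= 1 /\ kk s * (1 - s) = 1.
Proof.
  intro H. unfold kk. assert (0 < / (1 - s)) by (apply Rinv_0_lt_compat; lra).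
  assert (/ (1 - s) * (1 - s) = 1) by (field; lra). split; [nra| auto].
Qed.

Lemma Pf_lt s w L : s < 1 -> Pf s w L = Rmax (Rmin (kk s * L) (cc1 s * L + s*w/3)) (w - kk s * (w - L)).
Proof.
  intro H. unfold Pf. destruct Rlt_dec; [|lra]. unfold F3. f_equal. f_equal; ring. ring.
Qed.

Lemma Pf_ge s w L : ~ s < 1 -> Pf s w L = (L + w) / 3.
Proof. intro H. unfold Pf. destruct Rlt_dec; [lra|auto]. Qed.

Lemma Pf_bounds s w L : 0 <= s < 1 -> 0 <= L <= w ->
  0 <= Pf s w L /\ Pf s w L <= kk s * L /\ Pf s w L <= w /\ w - Pf s w L <= kk s * (w - L).
Proof.
  intros Hs HL. rewrite Pf_lt by lra. destruct (kk_pos s Hs) as [Hk1 Hk2].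
  unfold cc1. set (k := kk s) in *.
  replace ((1 - 2 * s / 3) * L) with (L - 2/3 * (s * L)) by field.
  assert (k * L >= L) by nra. assert (k * (w - L) >= w - L) by nra.
  assert (0 <= s * L <= s * w) by (split; nra). assert (s * w <= w) by nra.
  assert (s * L <= L) by nra. assert (w - L - 2/3 * (s * w) + 2/3 * (s * L) >= 0) by nra.
  unfold Rmax, Rmin; repeat destruct Rle_dec; repeat split; lra.
Qed.

Lemma Pf_strict s w L : 0 <= s < 1 -> 0 < L < w -> 0 < Pf s w L < w.
Proof.
  intros Hs HL. rewrite Pf_lt by lra. destruct (kk_pos s Hs) as [Hk1 Hk2].
  unfold cc1. set (k := kk s) in *.
  replace ((1 - 2 * s / 3) * L) with (L - 2/3 * (s * L)) by field.
  assert (k * L >= L) by nra. assert (k * (w - L) >= w - L) by nra.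
  assert (0 <= s * L <= s * w) by (split; nra). assert (s * w <= w) by nra.
  assert (s * L - s * w <= 0) by nra.
  assert (s * L <= L) by nra. assert (w - L - 2/3 * (s * w) + 2/3 * (s * L) > 0) by nra.
  unfold Rmax, Rmin; repeat destruct Rle_dec; repeat split; lra.
Qed.

Lemma Pf00 s : s < 1 -> Pf s 0 0 = 0.
Proof. intro H. rewrite Pf_lt by auto. unfold Rmax, Rmin; repeat destruct Rle_dec; lra. Qed.

Lemma Pf_s0 w L : Pf 0 w L = L.
Proof. rewrite Pf_lt by lra. unfold kk, cc1. replace (1 - 0) with 1 by ring. rewrite Rinv_1.
  unfold Rmax, Rmin; repeat destruct Rle_dec; lra. Qed.

Lemma c1_bounds s : 0 <= s <= 1 -> 1/3 <= cc1 s <= 1.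
Proof. unfold cc1; lra. Qed.

Lemma Qf_bounds s w L : 0 <= s <= 1 -> 0 <= L <= w ->
  0 <= Qf s w L /\ Qf s w L <= 3 * L /\ Qf s w L <= w /\ w - Qf s w L <= 3 * (w - L).
Proof.
  intros Hs HL. unfold Qf. pose proof (c1_bounds s Hs).
  set (B := (L - s * w / 3) / cc1 s).
  assert (HB : cc1 s * B = L - s * w / 3) by (unfold B; field; lra).
  unfold cc1 in *. 
  assert (0 <= (1 - s) * L <= L) by (split; nra).
  assert (0 <= (1 - s) * (w - L) <= w - L) by (split; nra).
  assert (B <= 3 * L) by nra.
  assert (B >= 3 * L - 2 * w) by nra.
  unfold Rmax, Rmin; repeat destruct Rle_dec; repeat split; lra.
Qed.

Lemma Qf_strict s w L : 0 <= s < 1 -> 0 < L < w -> 0 < Qf s w L < w.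
Proof.
  intros Hs HL. unfold Qf.
  assert (0 < (1 - s) * L) by nra.
  assert ((1 - s) * (w - L) > 0) by nra.
  assert ((1 - s) * (w - L) <= w - L) by nra.
  unfold Rmax, Rmin; repeat destruct Rle_dec; repeat split; lra.
Qed.

Lemma Qf00 s : 0 <= s <= 1 -> Qf s 0 0 = 0.
Proof. intro H. unfold Qf. pose proof (c1_bounds s H).
  replace ((0 - s * 0 / 3) / cc1 s) with 0 by (field; lra).
  unfold Rmax, Rmin; repeat destruct Rle_dec; lra. Qed.

Lemma Qf_G s w L : s < 1 -> Qf s w L = G3 (kk s) 0 (cc1 s) (s*w/3) (kk s) (w - kk s * w) L.
Proof.
  intro H. unfold Qf, G3, kk. f_equal. f_equal. field; lra. field; lra.
Qed.

Lemma QP s w L : 0 <= s < 1 -> Qf s w (Pf s w L) = L.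
Proof.
  intro H. destruct (kk_pos s H). pose proof (c1_bounds s ltac:(lra)).
  rewrite Qf_G by lra. unfold Pf. destruct Rlt_dec; [|lra].
  apply GF; lra.
Qed.

Lemma PQ s w L : 0 <= s < 1 -> Pf s w (Qf s w L) = L.
Proof.
  intro H. destruct (kk_pos s H). pose proof (c1_bounds s ltac:(lra)).
  rewrite Qf_G by lra. unfold Pf. destruct Rlt_dec; [|lra].
  apply FG; lra.
Qed.

Lemma QP1 w L : 0 < L < w -> Qf 1 w (Pf 1 w L) = L.
Proof.
  intro H. rewrite Pf_ge by lra. unfold Qf, cc1.
  replace (((L + w) / 3 - 1 * w / 3) / (1 - 2 * 1 / 3)) with L by field.
  replace ((1 - 1) * ((L + w) / 3)) with 0 by ring.
  replace (w - (1 - 1) * (w - (L + w) / 3)) with w by ring.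
  unfold Rmax, Rmin; repeat destruct Rle_dec; lra.
Qed.

Lemma PQ1 w L : w / 3 < L < 2 * w / 3 -> Pf 1 w (Qf 1 w L) = L.
Proof.
  intro H. rewrite Pf_ge by lra. unfold Qf, cc1.
  replace ((L - 1 * w / 3) / (1 - 2 * 1 / 3)) with (3 * L - w) by field.
  replace ((1 - 1) * L) with 0 by ring.
  replace (w - (1 - 1) * (w - L)) with w by ring.
  unfold Rmax, Rmin; repeat destruct Rle_dec; lra.
Qed.

Module CQ.
Import Coquelicot.Coquelicot.

Lemma cont_conv (F : R -> R -> R) s0 L0 :
  continuous (fun z : R*R => F (fst z) (snd z)) (s0,L0) ->
  forall eps, eps > 0 -> exists delta, delta > 0 /\ forall s L,
    Rabs (s - s0) < delta -> Rabs (L - L0) < delta -> Rabs (F s L - F s0 L0) < eps.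
Proof.
  intros H eps He.
  destruct (proj1 (filterlim_locally _ _) H (mkposreal eps He)) as [d Hd].
  exists d; split; [apply cond_pos|].
  intros s L H1 H2.
  apply (Hd (s,L)). split; assumption.
Qed.

Lemma cont_Rmax (f g : R*R -> R) z :
  continuous f z -> continuous g z -> continuous (fun x => Rmax (f x) (g x)) z.
Proof.
  intros Hf Hg.
  apply continuous_ext with (f := fun x => (f x + g x + Rabs (f x - g x)) / 2).
  { intro x. unfold Rmax, Rabs; destruct Rle_dec; destruct Rcase_abs; lra. }
  apply (continuous_mult (fun x => f x + g x + Rabs (f x - g x)) (fun _ => /2)).
  2: apply continuous_const.
  apply (continuous_plus (fun x => f x + g x)).
  apply (continuous_plus f g); auto.
  apply (continuous_comp (fun x => f x - g x) Rabs).
  apply (continuous_plus f (fun x => - g x)); auto.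
  apply (continuous_opp g); auto. apply continuous_Rabs.
Qed.

Lemma cont_Rmin (f g : R*R -> R) z :
  continuous f z -> continuous g z -> continuous (fun x => Rmin (f x) (g x)) z.
Proof.
  intros Hf Hg.
  apply continuous_ext with (f := fun x => - Rmax (- f x) (- g x)).
  { intro x. unfold Rmax, Rmin; destruct Rle_dec; destruct Rle_dec; lra. }
  apply (continuous_opp (fun x => Rmax (- f x) (- g x))).
  apply cont_Rmax; apply (continuous_opp (V:=R_NormedModule)); auto.
Qed.

Lemma cont_fst (z : R*R) : continuous (fun x : R*R => fst x) z.
Proof. apply continuous_fst. Qed.
Lemma cont_snd (z : R*R) : continuous (fun x : R*R => snd x) z.
Proof. apply continuous_snd. Qed.
Lemma cont_c (c : R) (z : R*R) : continuous (fun x : R*R => c) z.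
Proof. apply continuous_const. Qed.
Lemma cont_plus (f g : R*R -> R) z :
  continuous f z -> continuous g z -> continuous (fun x => f x + g x) z.
Proof. intros; apply (continuous_plus f g); auto. Qed.
Lemma cont_minus (f g : R*R -> R) z :
  continuous f z -> continuous g z -> continuous (fun x => f x - g x) z.
Proof. intros; apply (continuous_plus f (fun x => - g x)); auto. apply (continuous_opp g); auto. Qed.
Lemma cont_mult (f g : R*R -> R) z :
  continuous f z -> continuous g z -> continuous (fun x => f x * g x) z.
Proof. intros; apply (continuous_mult f g); auto. Qed.
Lemma cont_div (f g : R*R -> R) z :
  continuous f z -> continuous g z -> g z <> 0 -> continuous (fun x => f x / g x) z.
Proof. intros; apply (continuous_mult f (fun x => / g x)); auto.
  apply (continuous_comp g Rinv); auto. apply continuous_Rinv; auto. Qed.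

Definition th (x : R) : R := x / (1 + Rabs x).
Definition thinv (v : R) : R := v / (1 - Rabs v).

Lemma th_bound x : Rabs (th x) < 1.
Proof.
  unfold th. pose proof (Rabs_pos x).
  rewrite Rabs_div by lra. rewrite (Rabs_right (1 + Rabs x)) by lra.
  apply (Rmult_lt_reg_r (1 + Rabs x)); [lra|].
  unfold Rdiv; rewrite Rmult_assoc, Rinv_l by lra. lra.
Qed.

Lemma thinv_th x : thinv (th x) = x.
Proof.
  unfold thinv, th. pose proof (Rabs_pos x).
  rewrite Rabs_div by lra. rewrite (Rabs_right (1 + Rabs x)) by lra.
  replace (1 - Rabs x / (1 + Rabs x)) with (/ (1 + Rabs x)) by (field; lra).
  field; lra.
Qed.

Lemma th_thinv v : Rabs v < 1 -> th (thinv v) = v.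
Proof.
  intro H. unfold thinv, th. pose proof (Rabs_pos v).
  rewrite Rabs_div by lra. rewrite (Rabs_right (1 - Rabs v)) by lra.
  replace (1 + Rabs v / (1 - Rabs v)) with (/ (1 - Rabs v)) by (field; lra).
  field; lra.
Qed.

Lemma th_mono x y : x <= y -> th x <= th y.
Proof.
  intro H. unfold th.
  pose proof (Rabs_pos x). pose proof (Rabs_pos y).
  apply (Rmult_le_reg_r ((1 + Rabs x) * (1 + Rabs y))). nra.
  replace (x / (1 + Rabs x) * ((1 + Rabs x) * (1 + Rabs y))) with (x * (1 + Rabs y)) by (field; lra).
  replace (y / (1 + Rabs y) * ((1 + Rabs x) * (1 + Rabs y))) with (y * (1 + Rabs x)) by (field; lra).
  unfold Rabs; destruct (Rcase_abs x), (Rcase_abs y); nra.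
Qed.

Lemma th_lip x y : Rabs (th x - th y) <= Rabs (x - y).
Proof.
  unfold th.
  pose proof (Rabs_pos x). pose proof (Rabs_pos y).
  replace (x / (1 + Rabs x) - y / (1 + Rabs y)) with
    ((x * (1 + Rabs y) - y * (1 + Rabs x)) / ((1 + Rabs x) * (1 + Rabs y))) by (field; lra).
  rewrite Rabs_div by nra. rewrite (Rabs_right ((1 + Rabs x) * (1 + Rabs y))) by nra.
  apply (Rmult_le_reg_r ((1 + Rabs x) * (1 + Rabs y))). nra.
  unfold Rdiv; rewrite Rmult_assoc, Rinv_l by nra. rewrite Rmult_1_r.
  assert (Rabs (x * (1 + Rabs y) - y * (1 + Rabs x)) <= Rabs (x - y) * ((1 + Rabs x) * (1 + Rabs y))).
  { assert (H1 : 0 <= Rabs x * Rabs y) by (apply Rmult_le_pos; apply Rabs_pos).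
    assert (H2 : 0 <= Rabs x * Rabs y * Rabs (x - y)) by (apply Rmult_le_pos; [exact H1| apply Rabs_pos]).
    revert H1 H2.
    destruct (Rcase_abs x) as [hx|hx]; [rewrite (Rabs_left x hx) | rewrite (Rabs_right x hx)];
    destruct (Rcase_abs y) as [hy|hy]; [rewrite (Rabs_left y hy) | rewrite (Rabs_right y hy)|rewrite (Rabs_left y hy) | rewrite (Rabs_right y hy)];
    destruct (Rcase_abs (x - y)) as [h|h];
    [rewrite (Rabs_left _ h)|rewrite (Rabs_right _ h)|rewrite (Rabs_left _ h)|rewrite (Rabs_right _ h)|
     rewrite (Rabs_left _ h)|rewrite (Rabs_right _ h)|rewrite (Rabs_left _ h)|rewrite (Rabs_right _ h)];
    intros H1 H2; apply Rabs_le; split; nra. }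
  exact H1.
Qed.

Lemma thinv_cont v0 : Rabs v0 < 1 -> forall eps, eps > 0 -> exists delta, delta > 0 /\
  forall v, Rabs (v - v0) < delta -> Rabs (thinv v - thinv v0) < eps.
Proof.
  intros Hv eps He.
  assert (Hc : continuous thinv v0).
  { unfold thinv.
    apply (continuous_mult (fun v => v) (fun v => / (1 - Rabs v))).
    apply continuous_id.
    apply (continuous_comp (fun v => 1 - Rabs v) Rinv).
    apply (continuous_plus (fun _ => 1) (fun v => - Rabs v)). apply continuous_const.
    apply (continuous_opp (V:=R_NormedModule) Rabs). apply continuous_Rabs.
    apply continuous_Rinv. lra. }
  destruct (proj1 (filterlim_locally _ _) Hc (mkposreal eps He)) as [d Hd].
  exists d; split; [apply cond_pos|]. intros v Hv'. apply (Hd v). exact Hv'.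
Qed.

Lemma th_inv_bound x c : Rabs (th x) <= c -> c < 1 -> Rabs x <= c / (1 - c).
Proof.
  intros H Hc. unfold th in H. pose proof (Rabs_pos x).
  rewrite Rabs_div in H by lra. rewrite (Rabs_right (1 + Rabs x)) in H by lra.
  apply (Rmult_le_reg_r (1 - c)). lra.
  unfold Rdiv; rewrite Rmult_assoc, Rinv_l by lra.
  assert (Rabs x <= c * (1 + Rabs x)).
  { apply (Rmult_le_reg_r (/ (1 + Rabs x))). apply Rinv_0_lt_compat; lra.
    rewrite Rmult_assoc, Rinv_r by lra. lra. }
  lra.
Qed.

Lemma Qf_cont s0 w L0 : 0 <= s0 <= 1 -> forall eps, eps > 0 -> exists delta, delta > 0 /\
  forall s L, Rabs (s - s0) < delta -> Rabs (L - L0) < delta ->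
  Rabs (Qf s w L - Qf s0 w L0) < eps.
Proof.
  intros Hs. apply (cont_conv (fun s L => Qf s w L)).
  unfold Qf, cc1.
  apply (cont_Rmin (fun z => Rmax ((1 - fst z) * snd z) ((snd z - fst z * w / 3) / (1 - 2 * fst z / 3)))
                   (fun z => w - (1 - fst z) * (w - snd z))).
  - apply (cont_Rmax (fun z => (1 - fst z) * snd z) (fun z => (snd z - fst z * w / 3) / (1 - 2 * fst z / 3))).
    + apply cont_mult. apply cont_minus. apply cont_c. apply cont_fst. apply cont_snd.
    + apply cont_div.
      * apply cont_minus. apply cont_snd. apply (cont_div (fun z => fst z * w) (fun z => 3)).
        apply cont_mult. apply cont_fst. apply cont_c. apply cont_c. simpl; lra.
      * apply cont_minus. apply cont_c. apply (cont_div (fun z => 2 * fst z) (fun z => 3)).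
        apply cont_mult. apply cont_c. apply cont_fst. apply cont_c. simpl; lra.
      * simpl. lra.
  - apply cont_minus. apply cont_c. apply cont_mult. apply cont_minus. apply cont_c. apply cont_fst.
    apply cont_minus. apply cont_c. apply cont_snd.
Qed.

Lemma Pf_cont_lt s0 w L0 : s0 < 1 -> forall eps, eps > 0 -> exists delta, delta > 0 /\
  forall s L, Rabs (s - s0) < delta -> Rabs (L - L0) < delta ->
  Rabs (Pf s w L - Pf s0 w L0) < eps.
Proof.
  intros Hs eps He.
  set (G := fun s L => Rmax (Rmin (/ (1 - s) * L) ((1 - 2 * s / 3) * L + s*w/3)) (w - / (1 - s) * (w - L))).
  assert (HG : continuous (fun z : R*R => G (fst z) (snd z)) (s0, L0)).
  { unfold G.
    apply (cont_Rmax (fun z => Rmin (/ (1 - fst z) * snd z) ((1 - 2 * fst z / 3) * snd z + fst z*w/3))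
                     (fun z => w - / (1 - fst z) * (w - snd z))).
    - apply (cont_Rmin (fun z => / (1 - fst z) * snd z) (fun z => (1 - 2 * fst z / 3) * snd z + fst z*w/3)).
      + apply cont_mult; [|apply cont_snd].
        apply (continuous_comp (fun z : R*R => 1 - fst z) Rinv).
        apply cont_minus; [apply cont_c|apply cont_fst]. apply continuous_Rinv. simpl; lra.
      + apply cont_plus. apply cont_mult; [|apply cont_snd]. apply cont_minus; [apply cont_c|].
        apply (cont_div (fun z => 2 * fst z) (fun z => 3)). apply cont_mult. apply cont_c. apply cont_fst.
        apply cont_c. simpl; lra.
        apply (cont_div (fun z => fst z * w) (fun z => 3)). apply cont_mult. apply cont_fst. apply cont_c.
        apply cont_c. simpl; lra.
    - apply cont_minus; [apply cont_c|]. apply cont_mult.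
      apply (continuous_comp (fun z : R*R => 1 - fst z) Rinv).
      apply cont_minus; [apply cont_c|apply cont_fst]. apply continuous_Rinv. simpl; lra.
      apply cont_minus; [apply cont_c|apply cont_snd]. }
  destruct (cont_conv G s0 L0 HG eps He) as [d [Hd HH]].
  exists (Rmin d (1 - s0)). split. apply Rmin_pos; lra.
  intros s L H1 H2.
  assert (s < 1). { pose proof (Rmin_r d (1 - s0)). apply Rabs_def2 in H1. lra. }
  assert (EP : forall t M, t < 1 -> Pf t w M = G t M).
  { intros t M Ht. rewrite Pf_lt by auto. unfold G, kk. reflexivity. }
  rewrite !EP by auto. apply HH.
  pose proof (Rmin_l d (1 - s0)); lra. pose proof (Rmin_l d (1 - s0)); lra.
Qed.

Lemma Pf_near1 w L0 : 0 < L0 < w -> exists d, d > 0 /\ forall s L,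
  0 <= s <= 1 -> Rabs (s - 1) < d -> Rabs (L - L0) < d ->
  Pf s w L = (1 - 2 * s / 3) * L + s * w / 3.
Proof.
  intros HL.
  set (A := 2 * w / (3 * L0)). set (Bq := 2 * w / (w - L0)).
  assert (HA : A * L0 = 2 * w / 3) by (unfold A; field; lra).
  assert (HB : Bq * (w - L0) = 2 * w) by (unfold Bq; field; lra).
  assert (A > 0) by (unfold A; apply Rdiv_lt_0_compat; lra).
  assert (Bq > 0) by (unfold Bq; apply Rdiv_lt_0_compat; lra).
  set (M := 1 + A + Bq).
  exists (Rmin (Rmin (L0/2) ((w - L0)/2)) (/ M)). split.
  { apply Rmin_pos. apply Rmin_pos; lra. apply Rinv_0_lt_compat; unfold M; lra. }
  intros s L Hs H1 H2.
  pose proof (Rmin_l (Rmin (L0/2) ((w - L0)/2)) (/ M)).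
  pose proof (Rmin_r (Rmin (L0/2) ((w - L0)/2)) (/ M)).
  pose proof (Rmin_l (L0/2) ((w - L0)/2)). pose proof (Rmin_r (L0/2) ((w - L0)/2)).
  apply Rabs_def2 in H1. apply Rabs_def2 in H2.
  destruct (Rlt_dec s 1) as [Hs1|Hs1].
  2: { rewrite Pf_ge by auto. assert (s = 1) by lra. subst. field. }
  rewrite Pf_lt by auto. destruct (kk_pos s ltac:(lra)) as [Hk1 Hk2].
  set (k := kk s) in *.
  assert (HM : M * (1 - s) < 1).
  { assert (M * / M = 1) by (field; unfold M; lra).
    assert (0 < M) by (unfold M; lra). nra. }
  assert (k > M).
  { destruct (Rle_dec k M); [|lra]. exfalso.
    assert (k*(1-s) <= M*(1-s)) by (apply Rmult_le_compat_r; lra). lra. }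
  assert (HL2 : L >= L0/2) by lra. assert (HL3 : w - L >= (w - L0)/2) by lra.
  assert ((k - 1 - A) * L >= 0) by (apply Rle_ge, Rmult_le_pos; unfold M in *; lra).
  assert (A * (L - L0/2) >= 0) by (apply Rle_ge, Rmult_le_pos; lra).
  assert ((k - Bq) * (w - L) >= 0) by (apply Rle_ge, Rmult_le_pos; unfold M in *; lra).
  assert (Bq * ((w - L) - (w - L0)/2) >= 0) by (apply Rle_ge, Rmult_le_pos; lra).
  assert ((k - 1) * L >= w / 3) by nra.
  assert (k * (w - L) >= w) by nra.
  assert (0 <= s * L <= L) by (split; nra). assert (0 <= s * w <= w) by (split; nra).
  assert (k * L >= L + w / 3) by nra.
  unfold cc1. replace ((1 - 2 * s / 3) * L) with (L - 2/3 * (s * L)) by field.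
  unfold Rmax, Rmin; repeat destruct Rle_dec; lra.
Qed.

Lemma Pf_cont s0 w L0 : 0 <= s0 <= 1 -> 0 < L0 < w -> forall eps, eps > 0 -> exists delta, delta > 0 /\
  forall s L, 0 <= s <= 1 -> Rabs (s - s0) < delta -> Rabs (L - L0) < delta ->
  Rabs (Pf s w L - Pf s0 w L0) < eps.
Proof.
  intros Hs HL eps He. destruct (Rlt_dec s0 1) as [Hlt|Hge].
  - destruct (Pf_cont_lt s0 w L0 Hlt eps He) as [d [Hd H]]. exists d; split; auto.
  - assert (s0 = 1) by lra. subst s0.
    destruct (Pf_near1 w L0 HL) as [d1 [Hd1 H1]].
    set (G := fun s L => (1 - 2 * s / 3) * L + s * w / 3).
    assert (HG : continuous (fun z : R*R => G (fst z) (snd z)) (1, L0)).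
    { unfold G. apply cont_plus. apply cont_mult; [|apply cont_snd]. apply cont_minus; [apply cont_c|].
        apply (cont_div (fun z => 2 * fst z) (fun z => 3)). apply cont_mult. apply cont_c. apply cont_fst.
        apply cont_c. simpl; lra.
        apply (cont_div (fun z => fst z * w) (fun z => 3)). apply cont_mult. apply cont_fst. apply cont_c.
        apply cont_c. simpl; lra. }
    destruct (cont_conv G 1 L0 HG eps He) as [d [Hd HH]].
    exists (Rmin d d1). split. apply Rmin_pos; lra.
    intros s L Hs' Hs1 HL1.
    pose proof (Rmin_l d d1). pose proof (Rmin_r d d1).
    rewrite (H1 s L) by (auto; lra). rewrite (H1 1 L0) by (try split; try lra; rewrite Rminus_diag, Rabs_R0; lra).
    apply HH; lra.
Qed.

End CQ.
Import CQ.

Lemma d_fst p q : Rabs (fst p - fst q) <= dist2 p q.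
Proof.
  unfold dist2. rewrite <- sqrt_Rsqr_abs. apply sqrt_le_1_alt.
  destruct p as [a b], q as [c d]. simpl. unfold Rsqr.
  assert (0 <= (b - d) ^ 2) by (apply pow2_ge_0). nra.
Qed.

Lemma d_snd p q : Rabs (snd p - snd q) <= dist2 p q.
Proof.
  unfold dist2. rewrite <- sqrt_Rsqr_abs. apply sqrt_le_1_alt.
  destruct p as [a b], q as [c d]. simpl. unfold Rsqr.
  assert (0 <= (a - c) ^ 2) by (apply pow2_ge_0). nra.
Qed.

Lemma d_le p q : dist2 p q <= Rabs (fst p - fst q) + Rabs (snd p - snd q).
Proof.
  unfold dist2. destruct p as [a b], q as [c d]. cbn [fst snd].
  pose proof (Rabs_pos (a - c)). pose proof (Rabs_pos (b - d)).
  rewrite <- (sqrt_Rsqr (Rabs (a - c) + Rabs (b - d))) by lra.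
  apply sqrt_le_1_alt. rewrite <- (pow2_abs (a - c)), <- (pow2_abs (b - d)). unfold Rsqr. nra.
Qed.

Lemma d_line a b c : dist2 (a, c) (b, c) = Rabs (a - b).
Proof.
  unfold dist2. cbn [fst snd]. replace ((a - b) ^ 2 + (c - c) ^ 2) with (Rsqr (a - b)) by (unfold Rsqr; ring).
  apply sqrt_Rsqr_abs.
Qed.

Lemma line_conn_aux (c : R) (P : R -> Prop) (U V : pt -> Prop) :
  (forall x z y, P x -> P y -> x <= z <= y -> P z) ->
  rel_open (fun p => snd p = c /\ P (fst p)) U -> rel_open (fun p => snd p = c /\ P (fst p)) V ->
  (forall p, snd p = c /\ P (fst p) -> U p \/ V p) ->
  forall x0 x1, x0 <= x1 -> U (x0, c) -> V (x1, c) -> exists p, U p /\ V p.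
Proof.
  intros Hint [HU1 HU2] [HV1 HV2] Hcov x0 x1 Hx U0 V1.
  apply NNPP; intro Hno.
  assert (Hdis : forall p, U p -> V p -> False) by (intros p h1 h2; apply Hno; exists p; auto).
  assert (P0 : P x0) by (apply (proj2 (HU1 _ U0))).
  assert (P1 : P x1) by (apply (proj2 (HV1 _ V1))).
  set (E := fun t => x0 <= t <= x1 /\ U (t, c)).
  assert (Hb : bound E) by (exists x1; intros t [Ht _]; lra).
  assert (He : exists t, E t) by (exists x0; split; [lra| auto]).
  destruct (completeness E Hb He) as [s [Hs1 Hs2]].
  assert (x0 <= s) by (apply Hs1; split; [lra|auto]).
  assert (s <= x1) by (apply Hs2; intros t [Ht _]; lra).
  assert (Ps : P s) by (apply (Hint x0 s x1); auto).
  destruct (Hcov (s, c) (conj eq_refl Ps)) as [Us|Vs].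
  - assert (s < x1).
    { destruct (Rle_lt_or_eq_dec _ _ H0); auto. subst s. exfalso; apply (Hdis _ Us V1). }
    destruct (HU2 _ Us) as [e [He0 He1]].
    set (t := Rmin (s + e/2) x1).
    assert (s < t) by (unfold t; apply Rmin_glb_lt; lra).
    assert (t <= x1) by (unfold t; apply Rmin_r).
    assert (t <= s + e/2) by (unfold t; apply Rmin_l).
    assert (E t).
    { split; [lra|]. apply He1. split; [reflexivity|]. apply (Hint x0 t x1); auto; lra.
      rewrite d_line. rewrite Rabs_left1 by lra. lra. }
    pose proof (Hs1 t H5). lra.
  - assert (x0 < s).
    { destruct (Rle_lt_or_eq_dec _ _ H); auto. subst s. exfalso; apply (Hdis _ U0 Vs). }
    destruct (HV2 _ Vs) as [e [He0 He1]].
    assert (exists t, E t /\ s - e < t).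
    { apply NNPP; intro Hn.
      assert (is_upper_bound E (s - e)).
      { intros t Et. apply Rnot_lt_le. intro. apply Hn. exists t; auto. }
      pose proof (Hs2 _ H2). lra. }
    destruct H2 as [t [[Ht Ut] Hlt]].
    assert (t <= s) by (apply Hs1; split; auto).
    apply (Hdis (t, c)); auto. apply He1. split; [reflexivity|]. apply (Hint x0 t x1); auto.
    rewrite d_line. rewrite Rabs_right by lra. lra.
Qed.

Lemma line_connected (c : R) (P : R -> Prop) :
  (forall x z y, P x -> P y -> x <= z <= y -> P z) ->
  connected (fun p => snd p = c /\ P (fst p)).
Proof.
  intros Hint U V HU HV Hcov [p Up] [q Vq].
  pose proof (proj1 HU p Up) as [Hp _]. pose proof (proj1 HV q Vq) as [Hq _].
  destruct p as [x0 y0]; destruct q as [x1 y1]. simpl in Hp, Hq. subst y0 y1.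
  destruct (Rle_dec x0 x1).
  - apply (line_conn_aux c P U V Hint HU HV Hcov x0 x1); auto.
  - destruct (line_conn_aux c P V U Hint HV HU) with (x0 := x1) (x1 := x0) as [r [h1 h2]]; auto; try lra.
    intros p Hp0. destruct (Hcov p Hp0); auto.
    exists r; auto.
Qed.

Section Main.
Variable S : pt -> Prop.
Hypothesis hlow : forall x y, 0 <= y < 1 -> S (x, y).
Hypothesis hup : forall p, S p -> strip p.
Hypothesis hopen : rel_open strip S.

Definition Kset v := ~ (-1 < v < 1 /\ S (thinv v, 1)).

Lemma K_closed : closedR Kset.
Proof.
  intros v Hv. unfold Kset in Hv. apply NNPP in Hv. destruct Hv as [Hv1 Hv2].
  destruct (proj2 hopen _ Hv2) as [eps [He Heps]].
  assert (Hav : Rabs v < 1) by (apply Rabs_def1; lra).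
  destruct (thinv_cont v Hav eps He) as [d [Hd Hdd]].
  exists (Rmin d (1 - Rabs v)). split. apply Rmin_pos; lra.
  intros z Hz Kz. apply Kz.
  pose proof (Rmin_l d (1 - Rabs v)). pose proof (Rmin_r d (1 - Rabs v)).
  assert (Rabs z < 1).
  { pose proof (Rabs_triang_inv z v). lra. }
  split. apply Rabs_def2 in H1; lra.
  apply Heps. unfold strip; simpl; lra.
  rewrite d_line. rewrite Rabs_minus_sym. apply Hdd. lra.
Qed.

Lemma K_below : unbdd_below Kset.
Proof.
  intro u. exists (u - Rabs u - 1). split. pose proof (Rabs_pos u); lra.
  unfold Kset. intros [[H1 _] _]. pose proof (Rle_abs u). lra.
Qed.

Lemma K_above : forall u, exists v, u <= v /\ Kset v.
Proof.
  intro u. exists (u + Rabs u + 1). split. pose proof (Rabs_pos u); lra.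
  unfold Kset. intros [[_ H1] _]. pose proof (Rle_abs (- u)). rewrite Rabs_Ropp in H. lra.
Qed.

Lemma K_m1 : Kset (-1).
Proof. unfold Kset. lra. Qed.
Lemma K_p1 : Kset 1.
Proof. unfold Kset. lra. Qed.

Definition A u := aK Kset u.
Definition B u := bK Kset u.

Lemma Cle u : A u <= u <= B u.
Proof. eapply c_le; first [exact K_closed | exact K_below | exact K_above | idtac]. Qed.
Lemma CK u : Kset u -> A u = u /\ B u = u.
Proof. eapply c_K; first [exact K_closed | exact K_below | exact K_above | idtac]. Qed.
Lemma CnK u : ~ Kset u -> A u < u < B u.
Proof. eapply c_notK; first [exact K_closed | exact K_below | exact K_above | idtac]. Qed.
Lemma Cfree u z : A u < z < B u -> ~ Kset z.
Proof. eapply c_free; first [exact K_closed | exact K_below | exact K_above | idtac]. Qed.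
Lemma Csame u z : A u < z < B u -> A z = A u /\ B z = B u.
Proof. eapply c_same; first [exact K_closed | exact K_below | exact K_above | idtac]. Qed.
Lemma Cout u z : Kset z -> z <= A u \/ B u <= z.
Proof.
  intro Hz. destruct (Rle_dec z (A u)); auto. destruct (Rle_dec (B u) z); auto.
  exfalso. apply (Cfree u z); auto. lra.
Qed.
Lemma Cbnd u : -1 <= u <= 1 -> -1 <= A u /\ B u <= 1.
Proof.
  intro H. split.
  - apply (a_ge Kset K_below). apply K_m1. lra.
  - apply (b_le Kset K_above). apply K_p1. lra.
Qed.

Definition psi s u := A u + Pf s (B u - A u) (u - A u).
Definition chi s v := A v + Qf s (B v - A v) (v - A v).

Lemma psi_K s u : Kset u -> s < 1 -> psi s u = u.
Proof. intros H Hs. unfold psi. destruct (CK u H) as [-> ->].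
  replace (u - u) with 0 by ring. rewrite Pf00 by auto. ring. Qed.

Lemma chi_K s v : Kset v -> 0 <= s <= 1 -> chi s v = v.
Proof. intros H Hs. unfold chi. destruct (CK v H) as [-> ->].
  replace (v - v) with 0 by ring. rewrite Qf00 by auto. ring. Qed.

Lemma psi_in s u : ~ Kset u -> 0 <= s <= 1 -> A u < psi s u < B u.
Proof.
  intros H Hs. pose proof (CnK u H). unfold psi.
  destruct (Rlt_dec s 1).
  - pose proof (Pf_strict s (B u - A u) (u - A u) ltac:(lra) ltac:(lra)). lra.
  - rewrite Pf_ge by auto. lra.
Qed.

Lemma chi_in s v : ~ Kset v -> 0 <= s < 1 -> A v < chi s v < B v.
Proof.
  intros H Hs. pose proof (CnK v H). unfold chi.
  pose proof (Qf_strict s (B v - A v) (v - A v) Hs ltac:(lra)). lra.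
Qed.

Lemma psi_range s u : 0 <= s <= 1 -> (s < 1 \/ ~ Kset u) -> -1 < u < 1 -> -1 < psi s u < 1.
Proof.
  intros Hs Hc Hu. destruct (classic (Kset u)) as [Ku|Ku].
  - destruct Hc as [Hc|Hc]; [|contradiction]. rewrite psi_K; auto.
  - pose proof (psi_in s u Ku Hs). pose proof (Cbnd u ltac:(lra)). lra.
Qed.

Lemma chi_psi s u : 0 <= s <= 1 -> (s < 1 \/ ~ Kset u) -> chi s (psi s u) = u.
Proof.
  intros Hs Hc. destruct (classic (Kset u)) as [Ku|Ku].
  - destruct Hc as [Hc|Hc]; [|contradiction]. rewrite psi_K by auto. apply chi_K; auto.
  - pose proof (psi_in s u Ku Hs). pose proof (CnK u Ku).
    destruct (Csame u (psi s u) H) as [HA HB].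
    unfold chi. rewrite HA, HB. unfold psi.
    replace (A u + Pf s (B u - A u) (u - A u) - A u) with (Pf s (B u - A u) (u - A u)) by ring.
    destruct (Rlt_dec s 1).
    + rewrite QP by lra. ring.
    + assert (s = 1) by lra. subst. rewrite QP1 by lra. ring.
Qed.

Lemma psi_chi s v : 0 <= s < 1 -> psi s (chi s v) = v.
Proof.
  intros Hs. destruct (classic (Kset v)) as [Kv|Kv].
  - rewrite (chi_K s v Kv ltac:(lra)). apply psi_K; auto. lra.
  - pose proof (chi_in s v Kv Hs). pose proof (CnK v Kv).
    destruct (Csame v (chi s v) H) as [HA HB].
    unfold psi. rewrite HA, HB. unfold chi.
    replace (A v + Qf s (B v - A v) (v - A v) - A v) with (Qf s (B v - A v) (v - A v)) by ring.
    rewrite PQ by lra. ring.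
Qed.

Lemma psi0 u : psi 0 u = u.
Proof. unfold psi. rewrite Pf_s0. ring. Qed.

Lemma psi1 u : psi 1 u = (A u + B u + u) / 3.
Proof. unfold psi. rewrite Pf_ge by lra. field. Qed.

Lemma Qf1_mid w L : w / 3 < L < 2 * w / 3 -> Qf 1 w L = 3 * L - w.
Proof.
  intro H. unfold Qf, cc1.
  replace ((L - 1 * w / 3) / (1 - 2 * 1 / 3)) with (3 * L - w) by field.
  replace ((1 - 1) * L) with 0 by ring.
  replace (w - (1 - 1) * (w - L)) with w by ring.
  unfold Rmax, Rmin; repeat destruct Rle_dec; lra.
Qed.

Definition Mid v := ~ Kset v /\ (2 * A v + B v) / 3 < v < (A v + 2 * B v) / 3.

Lemma chi_range s v : 0 <= s <= 1 -> (s < 1 \/ Mid v) -> -1 < v < 1 -> -1 < chi s v < 1.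
Proof.
  intros Hs Hc Hv. destruct (classic (Kset v)) as [Kv|Kv].
  - rewrite chi_K; auto.
  - pose proof (Cbnd v ltac:(lra)). destruct Hc as [Hc|[_ Hm]].
    + pose proof (chi_in s v Kv ltac:(lra)). lra.
    + destruct (Rlt_dec s 1).
      * pose proof (chi_in s v Kv ltac:(lra)). lra.
      * assert (s = 1) by lra. subst. unfold chi. rewrite Qf1_mid by lra. lra.
Qed.


Lemma lemA s u z : 0 <= s < 1 -> Kset z -> Rabs (psi s u - z) <= kk s * Rabs (u - z).
Proof.
  intros Hs Kz. destruct (kk_pos s Hs) as [Hk1 Hk2].
  destruct (classic (Kset u)) as [Ku|Ku].
  - rewrite psi_K by (auto; lra). pose proof (Rabs_pos (u - z)). nra.
  - pose proof (CnK u Ku).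
    destruct (Pf_bounds s (B u - A u) (u - A u) Hs ltac:(lra)) as [P1 [P2 [P3 P4]]].
    unfold psi. set (P := Pf s (B u - A u) (u - A u)) in *. set (k := kk s) in *.
    destruct (Cout u z Kz) as [Hz|Hz].
    + rewrite (Rabs_right (A u + P - z)) by lra. rewrite (Rabs_right (u - z)) by lra.
      assert (k * (u - z) = k * (u - A u) + k * (A u - z)) by ring.
      assert (k * (A u - z) >= A u - z) by nra. lra.
    + rewrite (Rabs_left1 (A u + P - z)) by lra. rewrite (Rabs_left1 (u - z)) by lra.
      assert (k * - (u - z) = k * (B u - A u - (u - A u)) + k * (z - B u)) by ring.
      assert (k * (z - B u) >= z - B u) by nra. lra.
Qed.

Lemma lemB s v z : 0 <= s <= 1 -> Kset z -> Rabs (chi s v - z) <= 3 * Rabs (v - z).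
Proof.
  intros Hs Kz.
  destruct (classic (Kset v)) as [Kv|Kv].
  - rewrite chi_K by auto. pose proof (Rabs_pos (v - z)). lra.
  - pose proof (CnK v Kv).
    destruct (Qf_bounds s (B v - A v) (v - A v) Hs ltac:(lra)) as [P1 [P2 [P3 P4]]].
    unfold chi. set (P := Qf s (B v - A v) (v - A v)) in *.
    destruct (Cout v z Kz) as [Hz|Hz].
    + rewrite (Rabs_right (A v + P - z)) by lra. rewrite (Rabs_right (v - z)) by lra. lra.
    + rewrite (Rabs_left1 (A v + P - z)) by lra. rewrite (Rabs_left1 (v - z)) by lra. lra.
Qed.

Lemma psi_cont y0 u0 : 0 <= y0 <= 1 -> (y0 < 1 \/ ~ Kset u0) ->
  forall eta, eta > 0 -> exists delta, delta > 0 /\ forall s u, 0 <= s <= 1 ->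
  Rabs (s - y0) < delta -> Rabs (u - u0) < delta -> Rabs (psi s u - psi y0 u0) < eta.
Proof.
  intros Hy Hc eta He. destruct (classic (Kset u0)) as [Ku|Ku].
  - destruct Hc as [Hc|Hc]; [|contradiction].
    rewrite (psi_K y0 u0 Ku Hc).
    exists (Rmin ((1 - y0)/2) (eta * (1 - y0) / 4)). split.
    { apply Rmin_pos. lra. apply Rdiv_lt_0_compat; [nra|lra]. }
    intros s u Hs H1 H2.
    pose proof (Rmin_l ((1 - y0)/2) (eta * (1 - y0) / 4)).
    pose proof (Rmin_r ((1 - y0)/2) (eta * (1 - y0) / 4)).
    apply Rabs_def2 in H1.
    assert (Hs' : 0 <= s < 1) by lra.
    pose proof (lemA s u u0 Hs' Ku). destruct (kk_pos s Hs') as [Hk1 Hk2].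
    assert (kk s <= 2 / (1 - y0)).
    { apply (Rmult_le_reg_r (1 - s)). lra. rewrite Hk2.
      apply (Rmult_le_reg_r (1 - y0)). lra.
      replace (2 / (1 - y0) * (1 - s) * (1 - y0)) with (2 * (1 - s)) by (field; lra). lra. }
    assert (kk s * Rabs (u - u0) <= 2 / (1 - y0) * (eta * (1 - y0) / 4)).
    { apply Rmult_le_compat; try lra. apply Rabs_pos. }
    replace (2 / (1 - y0) * (eta * (1 - y0) / 4)) with (eta / 2) in H5 by (field; lra).
    lra.
  - pose proof (CnK u0 Ku).
    destruct (Pf_cont y0 (B u0 - A u0) (u0 - A u0) Hy ltac:(lra) eta He) as [d [Hd Hdd]].
    exists (Rmin d (Rmin (u0 - A u0) (B u0 - u0))). split.
    { apply Rmin_pos; [lra| apply Rmin_pos; lra]. }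
    intros s u Hs H1 H2.
    pose proof (Rmin_l d (Rmin (u0 - A u0) (B u0 - u0))).
    pose proof (Rmin_r d (Rmin (u0 - A u0) (B u0 - u0))).
    pose proof (Rmin_l (u0 - A u0) (B u0 - u0)). pose proof (Rmin_r (u0 - A u0) (B u0 - u0)).
    assert (Hu : A u0 < u < B u0) by (apply Rabs_def2 in H2; lra).
    destruct (Csame u0 u Hu) as [HA HB].
    unfold psi. rewrite HA, HB.
    replace (A u0 + Pf s (B u0 - A u0) (u - A u0) - (A u0 + Pf y0 (B u0 - A u0) (u0 - A u0)))
      with (Pf s (B u0 - A u0) (u - A u0) - Pf y0 (B u0 - A u0) (u0 - A u0)) by ring.
    apply Hdd; auto. lra.
    replace (u - A u0 - (u0 - A u0)) with (u - u0) by ring. lra.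
Qed.

Lemma chi_cont y0 v0 : 0 <= y0 <= 1 ->
  forall eta, eta > 0 -> exists delta, delta > 0 /\ forall s v, 0 <= s <= 1 ->
  Rabs (s - y0) < delta -> Rabs (v - v0) < delta -> Rabs (chi s v - chi y0 v0) < eta.
Proof.
  intros Hy eta He. destruct (classic (Kset v0)) as [Kv|Kv].
  - rewrite (chi_K y0 v0 Kv Hy).
    exists (eta / 4). split. lra.
    intros s v Hs H1 H2. pose proof (lemB s v v0 Hs Kv). lra.
  - pose proof (CnK v0 Kv).
    destruct (Qf_cont y0 (B v0 - A v0) (v0 - A v0) Hy eta He) as [d [Hd Hdd]].
    exists (Rmin d (Rmin (v0 - A v0) (B v0 - v0))). split.
    { apply Rmin_pos; [lra| apply Rmin_pos; lra]. }
    intros s u Hs H1 H2.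
    pose proof (Rmin_l d (Rmin (v0 - A v0) (B v0 - v0))).
    pose proof (Rmin_r d (Rmin (v0 - A v0) (B v0 - v0))).
    pose proof (Rmin_l (v0 - A v0) (B v0 - v0)). pose proof (Rmin_r (v0 - A v0) (B v0 - v0)).
    assert (Hu : A v0 < u < B v0) by (apply Rabs_def2 in H2; lra).
    destruct (Csame v0 u Hu) as [HA HB].
    unfold chi. rewrite HA, HB.
    replace (A v0 + Qf s (B v0 - A v0) (u - A v0) - (A v0 + Qf y0 (B v0 - A v0) (v0 - A v0)))
      with (Qf s (B v0 - A v0) (u - A v0) - Qf y0 (B v0 - A v0) (v0 - A v0)) by ring.
    apply Hdd; auto. lra.
    replace (u - A v0 - (v0 - A v0)) with (u - v0) by ring. lra.
Qed.

Lemma S_char p : S p <-> (0 <= snd p < 1) \/ (snd p = 1 /\ ~ Kset (th (fst p))).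
Proof.
  destruct p as [x y]; simpl. split.
  - intro H. pose proof (hup _ H) as Hs; unfold strip in Hs; simpl in Hs.
    destruct (Rlt_dec y 1); [left; lra| right]. split; [lra|].
    intro Hk. apply Hk. pose proof (th_bound x). apply Rabs_def2 in H0.
    split; [lra|]. rewrite thinv_th. assert (y = 1) by lra. subst; auto.
  - intros [H|[H1 H2]]. apply hlow; auto.
    subst. apply NNPP in H2. destruct H2 as [_ H2]. rewrite thinv_th in H2. auto.
Qed.

Definition hh (p : pt) : pt := (thinv (psi (snd p) (th (fst p))), snd p).
Definition gg (q : pt) : pt := (thinv (chi (snd q) (th (fst q))), snd q).
Definition S' (q : pt) : Prop := exists p, S p /\ hh p = q.

Lemma S_cond p : S p -> 0 <= snd p <= 1 /\ (snd p < 1 \/ ~ Kset (th (fst p))).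
Proof.
  intro H. apply S_char in H. destruct H as [H|[H1 H2]]; split; try lra; auto.
Qed.

Lemma th_range x : -1 < th x < 1.
Proof. pose proof (th_bound x). apply Rabs_def2 in H. lra. Qed.

Lemma gg_hh p : S p -> gg (hh p) = p.
Proof.
  intro H. destruct (S_cond p H) as [H1 H2].
  destruct p as [x y]. unfold gg, hh; simpl in *.
  rewrite th_thinv. rewrite chi_psi by auto. rewrite thinv_th. reflexivity.
  apply Rabs_def1; pose proof (psi_range y (th x) H1 H2 (th_range x)); lra.
Qed.

Lemma hh_S p : S p -> S (hh p).
Proof.
  intro H. destruct (S_cond p H) as [H1 H2]. apply S_char.
  unfold hh; simpl. destruct (Rlt_dec (snd p) 1); [left; lra|right].
  split; [lra|]. destruct H2 as [H2|H2]; [lra|].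
  rewrite th_thinv. apply (Cfree (th (fst p))). apply psi_in; auto.
  apply Rabs_def1; pose proof (psi_range (snd p) (th (fst p)) H1 (or_intror H2) (th_range _)); lra.
Qed.

Lemma S'_S q : S' q -> S q.
Proof. intros [p [Hp <-]]. apply hh_S; auto. Qed.

Lemma S'_top x : S' (x, 1) <-> Mid (th x).
Proof.
  split.
  - intros [p [Hp Hq]]. destruct (S_cond p Hp) as [H1 H2].
    destruct p as [x0 y0]. unfold hh in Hq; simpl in *. injection Hq as Hx Hy. subst y0.
    destruct H2 as [H2|H2]; [lra|].
    pose proof (psi_in 1 (th x0) H2 ltac:(lra)). pose proof (CnK _ H2).
    assert (th x = psi 1 (th x0)).
    { rewrite <- Hx. apply th_thinv. apply Rabs_def1;
      pose proof (psi_range 1 (th x0) H1 (or_intror H2) (th_range _)); lra. }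
    rewrite H3. destruct (Csame _ _ H) as [HA HB]. unfold Mid. rewrite HA, HB.
    split. apply (Cfree (th x0)); auto. rewrite psi1. lra.
  - intros [Hk Hm]. set (v := th x) in *.
    set (z := 3 * v - A v - B v).
    pose proof (CnK v Hk).
    assert (Hz : A v < z < B v) by (unfold z; lra).
    destruct (Csame v z Hz) as [HA HB].
    pose proof (Cbnd v ltac:(pose proof (th_range x); fold v in H0; lra)).
    assert (Hz1 : Rabs z < 1) by (apply Rabs_def1; lra).
    exists (thinv z, 1). split.
    + apply S_char. right. simpl. split; auto. rewrite th_thinv by auto. apply (Cfree v); auto.
    + unfold hh; simpl. rewrite th_thinv by auto. rewrite psi1. rewrite HA, HB.
      replace ((A v + B v + z) / 3) with v by (unfold z; field). unfold v. rewrite thinv_th. auto.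
Qed.

Lemma S'_cond q : S' q -> 0 <= snd q <= 1 /\ (snd q < 1 \/ Mid (th (fst q))).
Proof.
  intro H. pose proof (S_cond q (S'_S q H)) as [H1 _]. split; auto.
  destruct (Rlt_dec (snd q) 1); [left; auto| right].
  destruct q as [x y]; simpl in *. assert (y = 1) by lra. subst. apply S'_top; auto.
Qed.

Lemma hh_cont : continuous_on S hh.
Proof.
  intros p0 Hp0 eps He. destruct (S_cond p0 Hp0) as [H1 H2].
  set (w0 := psi (snd p0) (th (fst p0))).
  pose proof (psi_range (snd p0) (th (fst p0)) H1 H2 (th_range _)) as Hw0. fold w0 in Hw0.
  destruct (thinv_cont w0 ltac:(apply Rabs_def1; lra) (eps/2) ltac:(lra)) as [eta [Heta Ht]].
  destruct (psi_cont (snd p0) (th (fst p0)) H1 H2 eta Heta) as [d [Hd Hdd]].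
  exists (Rmin d (eps/2)). split. apply Rmin_pos; lra.
  intros q Hq Hdist. pose proof (Rmin_l d (eps/2)). pose proof (Rmin_r d (eps/2)).
  destruct (S_cond q Hq) as [Hq1 Hq2].
  pose proof (d_fst p0 q). pose proof (d_snd p0 q).
  pose proof (d_le (hh p0) (hh q)).
  unfold hh at 3 4 in H5; simpl in H5.
  assert (Rabs (psi (snd q) (th (fst q)) - w0) < eta).
  { apply Hdd; auto. rewrite Rabs_minus_sym; lra.
    pose proof (th_lip (fst q) (fst p0)). rewrite (Rabs_minus_sym (fst q)) in H6. lra. }
  apply Ht in H6. fold w0 in H5. rewrite Rabs_minus_sym in H6. lra.
Qed.

Lemma gg_cont : continuous_on S' gg.
Proof.
  intros p0 Hp0 eps He. destruct (S'_cond p0 Hp0) as [H1 H2].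
  set (w0 := chi (snd p0) (th (fst p0))).
  pose proof (chi_range (snd p0) (th (fst p0)) H1 H2 (th_range _)) as Hw0. fold w0 in Hw0.
  destruct (thinv_cont w0 ltac:(apply Rabs_def1; lra) (eps/2) ltac:(lra)) as [eta [Heta Ht]].
  destruct (chi_cont (snd p0) (th (fst p0)) H1 eta Heta) as [d [Hd Hdd]].
  exists (Rmin d (eps/2)). split. apply Rmin_pos; lra.
  intros q Hq Hdist. pose proof (Rmin_l d (eps/2)). pose proof (Rmin_r d (eps/2)).
  destruct (S'_cond q Hq) as [Hq1 Hq2].
  pose proof (d_fst p0 q). pose proof (d_snd p0 q).
  pose proof (d_le (gg p0) (gg q)).
  unfold gg at 3 4 in H5; simpl in H5.
  assert (Rabs (chi (snd q) (th (fst q)) - w0) < eta).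
  { apply Hdd; auto. rewrite Rabs_minus_sym; lra.
    pose proof (th_lip (fst q) (fst p0)). rewrite (Rabs_minus_sym (fst q)) in H6. lra. }
  apply Ht in H6. fold w0 in H5. rewrite Rabs_minus_sym in H6. lra.
Qed.

Lemma homeo : homeomorphism S S' hh.
Proof.
  split. intros p Hp. exists p; auto.
  exists gg. split; [|split; [|split; [|split]]].
  - intros q [p [Hp <-]]. rewrite gg_hh; auto.
  - exact gg_hh.
  - intros q [p [Hp <-]]. rewrite gg_hh; auto.
  - exact hh_cont.
  - exact gg_cont.
Qed.

Definition T := fun p => S' p /\ snd p = 1.

Lemma T_mid p : T p -> Mid (th (fst p)).
Proof. intros [H1 H2]. destruct p as [x y]; simpl in *. subst. apply S'_top; auto. Qed.

Lemma Mid_edge2 z u : Mid z -> A u < B u -> z <> (A u + 2 * B u) / 3.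
Proof.
  intros [Hk Hm] Hab Hz. assert (A u < z < B u) by lra.
  destruct (Csame u z H) as [HA HB]. rewrite HA, HB in Hm. lra.
Qed.
Lemma Mid_edge1 z u : Mid z -> A u < B u -> z <> (2 * A u + B u) / 3.
Proof.
  intros [Hk Hm] Hab Hz. assert (A u < z < B u) by lra.
  destruct (Csame u z H) as [HA HB]. rewrite HA, HB in Hm. lra.
Qed.

Lemma sep (C : pt -> Prop) (f : pt -> R) (m : R) (p0 : pt) :
  connected C -> (forall q, C q -> f q <> m) ->
  (forall q r, Rabs (f q - f r) <= dist2 q r) -> C p0 -> f p0 < m ->
  forall q, C q -> f q < m.
Proof.
  intros Hc Hne Hl Hp0 Hf0 q Hq. apply Rnot_le_lt. intro Hge.
  assert (Hgt : f q > m) by (destruct Hge; auto; exfalso; apply (Hne q Hq); auto).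
  destruct (Hc (fun r => C r /\ f r < m) (fun r => C r /\ f r > m)) as [r [[_ h1] [_ h2]]].
  - split. intros r [h _]; auto.
    intros r [hr hf]. exists (m - f r). split. lra. intros t Ht Hd. split; auto.
    pose proof (Hl r t). pose proof (Rle_abs (f t - f r)). rewrite Rabs_minus_sym in H. lra.
  - split. intros r [h _]; auto.
    intros r [hr hf]. exists (f r - m). split. lra. intros t Ht Hd. split; auto.
    pose proof (Hl r t). pose proof (Rle_abs (f r - f t)). lra.
  - intros r Hr. destruct (Rtotal_order (f r) m) as [h|[h|h]]; auto.
    exfalso; apply (Hne r Hr h).
  - exists p0; auto.
  - exists q; auto.
  - lra.
Qed.

Lemma lip_th q r : Rabs (th (fst q) - th (fst r)) <= dist2 q r.
Proof. pose proof (th_lip (fst q) (fst r)). pose proof (d_fst q r). lra. Qed.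
Lemma lip_nth q r : Rabs (- th (fst q) - - th (fst r)) <= dist2 q r.
Proof. replace (- th (fst q) - - th (fst r)) with (- (th (fst q) - th (fst r))) by ring.
  rewrite Rabs_Ropp. apply lip_th. Qed.

Definition I3 a b := fun q : pt => snd q = 1 /\ (fun x => (2 * a + b) / 3 < th x < (a + 2 * b) / 3) (fst q).

Lemma comp_I C p0 : component T C -> C p0 ->
  forall q, C q <-> I3 (A (th (fst p0))) (B (th (fst p0))) q.
Proof.
  intros [_ [HCT [Hconn Hmax]]] Hp0.
  set (v0 := th (fst p0)).
  assert (Hm0 : Mid v0) by (apply T_mid; auto).
  destruct Hm0 as [Hk0 Hmm0]. pose proof (CnK v0 Hk0) as Hab.
  assert (Hsnd0 : snd p0 = 1) by (apply HCT; auto).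
  assert (Hup : forall q, C q -> th (fst q) < (A v0 + 2 * B v0) / 3).
  { apply (sep C (fun q => th (fst q)) _ p0 Hconn).
    - intros q Hq. cbv beta. apply Mid_edge2. apply T_mid; auto. lra.
    - apply lip_th.
    - exact Hp0.
    - cbv beta. fold v0. lra. }
  assert (Hlo : forall q, C q -> - th (fst q) < - ((2 * A v0 + B v0) / 3)).
  { apply (sep C (fun q => - th (fst q)) _ p0 Hconn).
    - intros q Hq Heq. cbv beta in Heq. apply (Mid_edge1 (th (fst q)) v0). apply T_mid; auto. lra. lra.
    - apply lip_nth.
    - exact Hp0.
    - cbv beta. fold v0. lra. }
  intro q. split.
  - intro Hq. split. apply HCT; auto. simpl. split. pose proof (Hlo q Hq). lra. apply Hup; auto.
  - intro Hq. apply (Hmax (I3 (A v0) (B v0))); auto.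
    + apply line_connected. intros x z y Hx Hy Hxz. pose proof (th_mono x z). pose proof (th_mono z y).
      split; lra.
    + intros r [Hr1 Hr2]. simpl in Hr2. split; auto.
      destruct r as [x y]; simpl in *. subst y. apply S'_top.
      assert (Hz : A v0 < th x < B v0) by lra.
      destruct (Csame v0 _ Hz) as [HA HB]. split. apply (Cfree v0); auto.
      rewrite HA, HB. lra.
    + exists p0. split; [split; [exact Hsnd0| simpl; fold v0; lra] | exact Hp0].
Qed.

Lemma comp_bounded C : component T C -> bounded2 (closure2 C).
Proof.
  intros Hc. pose proof Hc as [[p0 Hp0] _].
  pose proof (comp_I C p0 Hc Hp0) as HI.
  set (v0 := th (fst p0)) in *.
  assert (Hm0 : Mid v0) by (apply T_mid; apply (proj1 (proj2 Hc)); auto).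
  destruct Hm0 as [Hk0 _]. pose proof (CnK v0 Hk0) as Hab.
  pose proof (Cbnd v0 ltac:(pose proof (th_range (fst p0)); unfold v0; lra)) as Hb.
  set (c := Rmax (Rabs ((2 * A v0 + B v0) / 3)) (Rabs ((A v0 + 2 * B v0) / 3))).
  assert (Hc1 : c < 1).
  { unfold c. apply Rmax_lub_lt; apply Rabs_def1; lra. }
  exists (c / (1 - c) + 3). intros p Hp.
  destruct (Hp 1 ltac:(lra)) as [q [Cq Hd]].
  apply HI in Cq. destruct Cq as [Hq1 Hq2]. simpl in Hq2.
  assert (Rabs (th (fst q)) <= c).
  { unfold c. apply Rabs_le. pose proof (Rmax_l (Rabs ((2 * A v0 + B v0) / 3)) (Rabs ((A v0 + 2 * B v0) / 3))).
    pose proof (Rmax_r (Rabs ((2 * A v0 + B v0) / 3)) (Rabs ((A v0 + 2 * B v0) / 3))).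
    pose proof (Rle_abs ((A v0 + 2 * B v0) / 3)). pose proof (Rle_abs (- ((2 * A v0 + B v0) / 3))).
    rewrite Rabs_Ropp in H2. split; lra. }
  pose proof (th_inv_bound (fst q) c H Hc1).
  pose proof (d_le (0,0) p). simpl in H1.
  pose proof (d_fst p q). pose proof (d_snd p q).
  rewrite Rabs_minus_sym in H1. rewrite (Rabs_minus_sym 0 (snd p)) in H1.
  rewrite !Rminus_0_r in H1.
  pose proof (Rabs_triang_inv (fst p) (fst q)). pose proof (Rabs_triang_inv (snd p) (snd q)).
  rewrite Hq1 in H5, H3. rewrite Rabs_R1 in H5. lra.
Qed.

Lemma closure_le C (f : pt -> R) m p : (forall q, C q -> f q < m) ->
  (forall q r, Rabs (f q - f r) <= dist2 q r) -> closure2 C p -> f p <= m.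
Proof.
  intros H Hl Hp. apply Rnot_lt_le. intro Hlt.
  destruct (Hp (f p - m) ltac:(lra)) as [q [Cq Hd]].
  pose proof (H q Cq). pose proof (Hl p q). pose proof (Rle_abs (f p - f q)). lra.
Qed.

Lemma comp_disj C1 C2 : component T C1 -> component T C2 ->
  (exists p, closure2 C1 p /\ closure2 C2 p) -> forall p, C1 p <-> C2 p.
Proof.
  intros H1 H2 [p [Hp1 Hp2]].
  pose proof H1 as [[p1 Hq1] _]. pose proof H2 as [[p2 Hq2] _].
  pose proof (comp_I C1 p1 H1 Hq1) as HI1. pose proof (comp_I C2 p2 H2 Hq2) as HI2.
  set (v1 := th (fst p1)) in *. set (v2 := th (fst p2)) in *.
  assert (Hab1 : A v1 < v1 < B v1).
  { apply CnK. apply (T_mid p1). apply (proj1 (proj2 H1)); auto. }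
  assert (Hab2 : A v2 < v2 < B v2).
  { apply CnK. apply (T_mid p2). apply (proj1 (proj2 H2)); auto. }
  assert (Hz1 : A v1 < th (fst p) < B v1).
  { assert (th (fst p) <= (A v1 + 2 * B v1) / 3).
    { apply (closure_le C1 (fun q => th (fst q))); auto. intros q Hq. apply HI1 in Hq. apply Hq.
      apply lip_th. }
    assert (- th (fst p) <= - ((2 * A v1 + B v1) / 3)).
    { apply (closure_le C1 (fun q => - th (fst q))); auto. intros q Hq. apply HI1 in Hq.
      destruct Hq as [_ Hq]. simpl in Hq. lra. apply lip_nth. }
    lra. }
  assert (Hz2 : A v2 < th (fst p) < B v2).
  { assert (th (fst p) <= (A v2 + 2 * B v2) / 3).
    { apply (closure_le C2 (fun q => th (fst q))); auto. intros q Hq. apply HI2 in Hq. apply Hq.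
      apply lip_th. }
    assert (- th (fst p) <= - ((2 * A v2 + B v2) / 3)).
    { apply (closure_le C2 (fun q => - th (fst q))); auto. intros q Hq. apply HI2 in Hq.
      destruct Hq as [_ Hq]. simpl in Hq. lra. apply lip_nth. }
    lra. }
  destruct (Csame _ _ Hz1) as [HA1 HB1]. destruct (Csame _ _ Hz2) as [HA2 HB2].
  intro q. rewrite HI1, HI2. rewrite <- HA1, <- HB1, HA2, HB2. tauto.
Qed.

End Main.

Theorem mainTheorem3 (S : pt -> Prop)
  (hlow : forall x y, 0 <= y < 1 -> S (x, y))
  (hup : forall p, S p -> strip p)
  (hopen : rel_open strip S) :
  exists (S' : pt -> Prop) (h : pt -> pt),
    homeomorphism S S' h /\
    (* (1) *)
    (forall x y, 0 <= y < 1 -> S' (x, y)) /\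
    (forall p, S' p -> S p) /\
    (* (2) *)
    (forall C, component (fun p => S' p /\ snd p = 1) C ->
       bounded2 (closure2 C)) /\
    (forall C1 C2,
       component (fun p => S' p /\ snd p = 1) C1 ->
       component (fun p => S' p /\ snd p = 1) C2 ->
       (exists p, closure2 C1 p /\ closure2 C2 p) ->
       forall p, C1 p <-> C2 p) /\
    (* (3) *)
    (forall x, h (x, 0) = (x, 0)) /\
    (* (4) *)
    (forall p, S p -> snd (h p) = snd p).
Proof.
  exists (S' S), (hh S). split; [|split; [|split; [|split; [|split; [|split]]]]].
  - apply homeo; auto.
  - intros x y Hy. exists (gg S (x, y)). split.
    + unfold gg; simpl. apply hlow; auto.
    + unfold hh, gg; simpl. rewrite th_thinv.
      rewrite psi_chi by auto. rewrite thinv_th. reflexivity.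
      assert (Hr : -1 < chi S y (th x) < 1).
      { eapply chi_range; first [exact hlow | exact hup | exact hopen | lra | (left; lra) | apply th_range | idtac]. }
      apply Rabs_def1; lra.
  - apply S'_S; auto.
  - apply comp_bounded; auto.
  - apply comp_disj; auto.
  - intro x. unfold hh; simpl. rewrite psi0, thinv_th. reflexivity.
  - intros p _. reflexivity.
Qed.
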